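(* Let $\varrho=\{\varrho_{t,T}\}_{t\in[0,T]}$ be a dynamic risk measure which is stochastically conditionally time-consistent, normalized, and translation invariant. Then $\varrho$ is time consistent, i.e. $\varrho_{t,T}(Z_T)=\varrho_{t,T}\big(\varrho_{r,T}(Z_T)\big)$ for all $0\le t\le r\le T$ and all $Z_T\in\mathcal Z_T$, and $\varrho$ has the local property, i.e. $\varrho_{t,T}(\mathbf 1_A Z_T)=\mathbf 1_A\,\varrho_{t,T}(Z_T)$ for all $t\in[0,T]$, $Z_T\in\mathcal Z_T$ and $A\in\mathcal F_t$.
   Context: Let $\mathcal X$ be a finite state space, $T>0$, and $\{X_t\}_{0\le t\le T}$ a continuous-time Markov chain with values in $\mathcal X$, starting at a fixed state $x_0$, with transition function $Q_{t,r}(y|x)=P(X_r=y\mid X_t=x)$, $0\le t<r\le T$, $x,y\in\mathcal X$. The transition rates $G_t(y|x)=\lim_{\tau\downarrow0}\frac1\tau[Q_{t,t+\tau}(y|x)-\delta_x(y)]$ are assumed to exist, be finite and be uniformly bounded over $t\in[0,T]$ ($\delta_x(y)=1$ if $y=x$, $0$ otherwise). For $0\le t<r\le T$ and $\xi\in\mathcal X$, $\Xi^{\xi}_{t,r}$ denotes the space of piecewise-constant right-continuous paths $[t,r]\to\mathcal X$ starting at $\xi$ (with the $\sigma$-algebra generated by finite-dimensional cylinders), $P^{\xi}_{t,r}$ the law on it of the chain started at $\xi$ at time $t$, and $\Xi_{0,t}=\bigcup_{\xi}\Xi^{\xi}_{0,t}$. $\{\mathcal F_t\}$ is the filtration generated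 by $X$, and $\mathcal Z_t$ is the space of bounded $\mathcal F_t$-measurable random variables, each identified with a measurable functional of the path $\xi_{[0,t]}$. A conditional risk measure is a mapping $\varrho_{t,T}:\mathcal Z_T\to\mathcal Z_t$; a dynamic risk measure is a family $\varrho=\{\varrho_{t,T}\}_{t\in[0,T]}$ of them. It is normalized if $\varrho_{t,T}(0)=0$ for all $t$; translation invariant if $\varrho_{t,T}(Z_t+Z_T)=Z_t+\varrho_{t,T}(Z_T)$ for all $Z_t\in\mathcal Z_t$, $Z_T\in\mathcal Z_T$, $t\in[0,T]$. For a fixed history $\xi_{[0,t]}\in\Xi_{0,t}$ and $r\in[t,T]$, $\varrho_{r,T}(Z_T)\mid\xi_{[0,t]}$ denotes the random variable $\varrho_{r,T}(Z_T)$ regarded as a function of the path on $[t,r]$ that continues $\xi_{[0,t]}$, with the distribution induced by $P^{\xi_t}_{t,r}$; $\varrho_{t,T}(Z_T)(\xi_{[0,t]})$ denotes the value of $\varrho_{t,T}(Z_T)$ at the history $\xi_{[0,t]}$. For random variables $U,V$ (possibly on different probability spaces), $U\preceq_{\rm st}V$ means $P(U>\eta)\le P(V>\eta)$ for all $\eta\in\mathbb R$. The dynamic risk measure $\varrho$ is stochastically conditionally time-consistent if for all $0\le t\le r\le T$, all $\xi_{[0,t]}\in\Xi_{0,t}$ and all $Z_T,W_T\in\mathcal Z_T$, the relation $\varrho_{r,T}(Z_T)\mid\xi_{[0,t]}\preceq_{\rm st}\varrho_{r,T}(W_T)\mid\xi_{[0,t]}$ implies $\varrho_{t,T}(Z_T)(\xi_{[0,t]})\le\varrho_{t,T}(W_T)(\xi_{[0,t]})$.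 *)

(* Defs.v *)
From Stdlib Require Import Reals Lra List Classical ClassicalEpsilon
  FunctionalExtensionality PropExtensionality.
Open Scope R_scope.

Definition is_sigma_algebra {A : Type} (M : (A -> Prop) -> Prop) : Prop :=
  M (fun _ => True) /\
  (forall E, M E -> M (fun a => ~ E a)) /\
  (forall En : nat -> A -> Prop, (forall n, M (En n)) ->
     M (fun a => exists n, En n a)).

Definition generated {A : Type} (G : (A -> Prop) -> Prop) (E : A -> Prop) : Prop :=
  forall M, is_sigma_algebra M -> (forall F, G F -> M F) -> M E.

Definition is_prob_measure {A : Type} (M : (A -> Prop) -> Prop)
  (mu : (A -> Prop) -> R) : Prop :=
  (forall E, M E -> 0 <= mu E) /\
  mu (fun _ => True) = 1 /\
  (forall En : nat -> A -> Prop, (forall n, M (En n)) ->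
     (forall n m a, n <> m -> En n a -> En m a -> False) ->
     Un_cv (fun N => sum_f_R0 (fun k => mu (En k)) N)
           (mu (fun a => exists n, En n a))).

Definition measurable_fun {A : Type} (M : (A -> Prop) -> Prop) (Z : A -> R) : Prop :=
  forall c : R, M (fun a => c < Z a).

Definition bounded_fun {A : Type} (Z : A -> R) : Prop :=
  exists K, forall a, Rabs (Z a) <= K.

Definition delta {X : Type} (x y : X) : R :=
  if excluded_middle_informative (x = y) then 1 else 0.

Definition indicator {A : Type} (E : A -> Prop) (a : A) : R :=
  if excluded_middle_informative (E a) then 1 else 0.

(* f, restricted to [t,r], is piecewise constant and right-continuous with
   finitely many jumps (all jumps lie in the finite list l);
   outside [t,r] f is extended constantly (canonical representative). *)
Definition pc_on {X : Type} (t r : R) (f : R -> X) : Prop :=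
  (forall s, s < t -> f s = f t) /\
  (forall s, r < s -> f s = f r) /\
  exists l : list R, forall s s', t <= s -> s <= s' -> s' <= r ->
    (forall u, In u l -> ~ (s < u /\ u <= s')) -> f s = f s'.

Definition Xi0 (X : Type) (T : R) := { f : R -> X | pc_on 0 T f }.

Definition Xi (X : Type) (t r : R) (xi : X) := { f : R -> X | pc_on t r f /\ f t = xi }.

Definition Ft {X : Type} (T t : R) : (Xi0 X T -> Prop) -> Prop :=
  generated (fun E => exists s y, 0 <= s <= t /\
                        forall w, E w <-> proj1_sig w s = y).

Definition cyl {X : Type} (t r : R) (xi : X) : (Xi X t r xi -> Prop) -> Prop :=
  generated (fun E => exists s y, t <= s <= r /\
                        forall w, E w <-> proj1_sig w s = y).

Definition Zsp {X : Type} (T t : R) (Z : Xi0 X T -> R) : Prop :=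
  bounded_fun Z /\ measurable_fun (Ft T t) Z.

Definition canon {X : Type} {T : R} (d : Xi0 X T) (f : R -> X) : Xi0 X T :=
  match excluded_middle_informative (pc_on 0 T f) with
  | left H => exist _ f H
  | right _ => d
  end.

(* the path equal to the history w on [0,t) and to eta from t on
   (eta is a path on [t,r] with eta t = w t; it is constant after r) *)
Definition concat {X : Type} {T : R} (w : Xi0 X T) (t : R) (eta : R -> X) : Xi0 X T :=
  canon w (fun s => if Rlt_dec s t then proj1_sig w s else eta s).

Definition st_le {A B : Type} (mu : (A -> Prop) -> R) (U : A -> R)
  (nu : (B -> Prop) -> R) (V : B -> R) : Prop :=
  forall eta : R, mu (fun a => eta < U a) <= nu (fun b => eta < V b).

Fixpoint incr_times {X : Type} (s0 : R) (l : list (R * X)) : Prop :=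
  match l with
  | nil => True
  | (s, _) :: l' => s0 < s /\ incr_times s l'
  end.

Fixpoint fdd_prob {X : Type} (Q : R -> R -> X -> X -> R) (s0 : R) (y0 : X)
  (l : list (R * X)) : R :=
  match l with
  | nil => 1
  | (s, y) :: l' => Q s0 s y0 y * fdd_prob Q s y l'
  end.

(* P t r xi is the law of the chain started at xi at time t, on Xi^xi_{t,r};
   Q s r x y = P(X_r = y | X_s = x); G the transition rates *)
Definition markov_laws {X : Type} (T : R) (Q : R -> R -> X -> X -> R)
  (G : R -> X -> X -> R)
  (P : forall (t r : R) (xi : X), (Xi X t r xi -> Prop) -> R) : Prop :=
  (forall t r xi, 0 <= t <= r -> r <= T -> is_prob_measure (cyl t r xi) (P t r xi)) /\
  (forall t r xi (l : list (R * X)), 0 <= t -> t <= r -> r <= T -> incr_times t l ->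
     Forall (fun p => fst p <= r) l ->
     P t r xi (fun w => Forall (fun p => proj1_sig w (fst p) = snd p) l)
       = fdd_prob Q t xi l) /\
  (forall t x y, 0 <= t <= T ->
     forall eps, 0 < eps -> exists dl, 0 < dl /\
       forall tau, 0 < tau < dl -> t + tau <= T ->
         Rabs ((Q t (t + tau) x y - delta x y) / tau - G t x y) < eps) /\
  (exists K, forall t x y, 0 <= t <= T -> Rabs (G t x y) <= K).

(* rho t : Z_T -> Z_t, i.e. rho t = rho_{t,T} *)
Definition dyn_risk_measure {X : Type} (T : R)
  (rho : R -> (Xi0 X T -> R) -> (Xi0 X T -> R)) : Prop :=
  forall t Z, 0 <= t <= T -> Zsp T T Z -> Zsp T t (rho t Z).

Definition normalized {X : Type} (T : R)
  (rho : R -> (Xi0 X T -> R) -> (Xi0 X T -> R)) : Prop :=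
  forall t, 0 <= t <= T -> forall w, rho t (fun _ => 0) w = 0.

Definition translation_invariant {X : Type} (T : R)
  (rho : R -> (Xi0 X T -> R) -> (Xi0 X T -> R)) : Prop :=
  forall t Zt ZT, 0 <= t <= T -> Zsp T t Zt -> Zsp T T ZT ->
    forall w, rho t (fun v => Zt v + ZT v) w = Zt w + rho t ZT w.

(* the history xi_[0,t] is represented by any w in Xi_{0,T} (through its
   restriction to [0,t]); rho_{r,T}(Z) | xi_[0,t] is the r.v.
   eta |-> rho r Z (concat w t eta) on (Xi^{w t}_{t,r}, P t r (w t)) *)
Definition stoch_cond_time_consistent {X : Type} (T : R)
  (P : forall (t r : R) (xi : X), (Xi X t r xi -> Prop) -> R)
  (rho : R -> (Xi0 X T -> R) -> (Xi0 X T -> R)) : Prop :=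
  forall t r, 0 <= t -> t <= r -> r <= T ->
  forall (w : Xi0 X T) Z W, Zsp T T Z -> Zsp T T W ->
    st_le (P t r (proj1_sig w t))
          (fun eta => rho r Z (concat w t (proj1_sig eta)))
          (P t r (proj1_sig w t))
          (fun eta => rho r W (concat w t (proj1_sig eta))) ->
    rho t Z w <= rho t W w.

(* Main.v *)
Require Import Defs.
From Stdlib Require Import Reals List Lra Classical ClassicalEpsilon FunctionalExtensionality PropExtensionality.
Open Scope R_scope.

Lemma M_ext {A : Type} (M : (A -> Prop) -> Prop) (E F : A -> Prop) :
  M E -> (forall a, E a <-> F a) -> M F.
Proof.
  intros HE H. replace F with E; auto.
  apply functional_extensionality; intro a; apply propositional_extensionality; auto.
Qed.

Lemma sig_const {A : Type} (M : (A -> Prop) -> Prop) (P : Prop) :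
  is_sigma_algebra M -> M (fun _ => P).
Proof.
  intros [H1 [H2 H3]]. destruct (classic P) as [HP|HP].
  - apply (M_ext M (fun _ => True)); auto; intuition.
  - apply (M_ext M (fun a => ~ True)); auto; intuition.
Qed.

Lemma sig_union {A : Type} (M : (A -> Prop) -> Prop) (E F : A -> Prop) :
  is_sigma_algebra M -> M E -> M F -> M (fun a => E a \/ F a).
Proof.
  intros [H1 [H2 H3]] HE HF.
  apply (M_ext M (fun a => exists n, (fun n => if Nat.eqb n 0 then E else F) n a)).
  - apply H3. intro n; destruct (Nat.eqb n 0); auto.
  - intro a; split.
    + intros [n Hn]; destruct (Nat.eqb n 0); auto.
    + intros [H|H]; [exists 0%nat | exists 1%nat]; simpl; auto.
Qed.

Lemma sig_inter {A : Type} (M : (A -> Prop) -> Prop) (E F : A -> Prop) :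
  is_sigma_algebra M -> M E -> M F -> M (fun a => E a /\ F a).
Proof.
  intros HM HE HF. pose proof HM as [H1 [H2 H3]].
  apply (M_ext M (fun a => ~ (fun a => ~ E a \/ ~ F a) a)).
  - apply H2. apply sig_union; auto.
  - intro a; split.
    + intro H; apply NNPP; intro H'; apply H. apply not_and_or in H'; auto.
    + intros [HA HB] [H|H]; auto.
Qed.

Lemma sig_compl {A : Type} (M : (A -> Prop) -> Prop) (E : A -> Prop) :
  is_sigma_algebra M -> M E -> M (fun a => ~ E a).
Proof. intros [H1 [H2 H3]] HE; auto. Qed.

Lemma generated_sigma {A : Type} (G : (A -> Prop) -> Prop) :
  is_sigma_algebra (generated G).
Proof.
  split; [|split].
  - intros M HM HG. apply HM.
  - intros E HE M HM HG. apply HM. apply HE; auto.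
  - intros En HEn M HM HG. apply HM. intro n; apply HEn; auto.
Qed.

Lemma Ft_mono {X : Type} (T t : R) (E : Xi0 X T -> Prop) :
  t <= T -> Ft T t E -> Ft T T E.
Proof.
  intros Ht HE M HM HG. apply HE; auto.
  intros F [s [y [Hs HF]]]. apply HG. exists s, y; split; auto; lra.
Qed.

Definition agree {X : Type} {T : R} (t : R) (w w' : Xi0 X T) : Prop :=
  forall s, 0 <= s <= t -> proj1_sig w s = proj1_sig w' s.

Lemma Ft_sat {X : Type} (T t : R) (E : Xi0 X T -> Prop) :
  Ft T t E -> forall w w', agree t w w' -> (E w <-> E w').
Proof.
  intros HE. apply (HE (fun E => forall w w', agree t w w' -> (E w <-> E w'))).
  - split; [|split].
    + intros; tauto.
    + intros F HF w w' Hw. specialize (HF w w' Hw). tauto.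
    + intros En HEn w w' Hw. split; intros [n Hn]; exists n;
        specialize (HEn n w w' Hw); tauto.
  - intros F [s [y [Hs HF]]] w w' Hw. rewrite !HF. rewrite (Hw s Hs). tauto.
Qed.

Lemma meas_sat {X : Type} (T t : R) (Z : Xi0 X T -> R) :
  measurable_fun (Ft T t) Z -> forall w w', agree t w w' -> Z w = Z w'.
Proof.
  intros HZ w w' Hw.
  destruct (Rtotal_order (Z w) (Z w')) as [H|[H|H]]; auto.
  - pose proof (Ft_sat T t _ (HZ (Z w)) w w' Hw). simpl in H0. exfalso.
    apply (Rlt_irrefl (Z w)). apply H0. auto.
  - pose proof (Ft_sat T t _ (HZ (Z w')) w w' Hw). simpl in H0. exfalso.
    apply (Rlt_irrefl (Z w')). apply H0. auto.
Qed.

Lemma concat_agree {X : Type} (T t : R) (w : Xi0 X T) (eta : R -> X) :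
  eta t = proj1_sig w t -> agree t w (Defs.concat w t eta).
Proof.
  intros He s Hs. unfold Defs.concat, canon.
  destruct (excluded_middle_informative (pc_on 0 T _)); simpl; auto.
  destruct (Rlt_dec s t); auto.
  assert (s = t) by lra. subst. auto.
Qed.

Lemma Zsp0 {X : Type} (T : R) : Zsp (X:=X) T T (fun _ => 0).
Proof.
  split.
  - exists 0. intros; rewrite Rabs_R0; lra.
  - intro c. apply sig_const. apply generated_sigma.
Qed.

Lemma Zsp_mono {X : Type} (T t : R) (Z : Xi0 X T -> R) :
  t <= T -> Zsp T t Z -> Zsp T T Z.
Proof.
  intros Ht [Hb Hm]. split; auto. intro c. apply (Ft_mono T t); auto.
Qed.

Lemma st_le_eq {A : Type} (mu : (A -> Prop) -> R) (U V : A -> R) :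
  (forall a, U a = V a) -> st_le mu U mu V.
Proof.
  intros H. replace V with U. intro; lra.
  apply functional_extensionality; auto.
Qed.

Theorem theorem3p2 (X : Type) (enum : list X) (Henum : forall x : X, In x enum)
  (x0 : X) (T : R) (HT : 0 < T)
  (Q : R -> R -> X -> X -> R) (G : R -> X -> X -> R)
  (P : forall (t r : R) (xi : X), (Xi X t r xi -> Prop) -> R)
  (HP : markov_laws T Q G P)
  (rho : R -> (Xi0 X T -> R) -> (Xi0 X T -> R))
  (Hrho : dyn_risk_measure T rho)
  (Hsct : stoch_cond_time_consistent T P rho)
  (Hnorm : normalized T rho)
  (Htrans : translation_invariant T rho) :
  (forall t r, 0 <= t -> t <= r -> r <= T ->
     forall Z, Zsp T T Z -> forall w, rho t Z w = rho t (rho r Z) w) /\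
  (forall t, 0 <= t <= T -> forall Z (A : Xi0 X T -> Prop),
     Zsp T T Z -> Ft T t A ->
     forall w, rho t (fun v => indicator A v * Z v) w = indicator A w * rho t Z w).
Proof.
  assert (Hid : forall r, 0 <= r <= T -> forall Z, Zsp T r Z -> forall v, rho r Z v = Z v).
  { intros r Hr Z HZ v.
    pose proof (Htrans r Z (fun _ => 0) Hr HZ (Zsp0 T) v) as H.
    rewrite (Hnorm r Hr v) in H.
    replace (fun v => Z v + 0) with Z in H.
    - rewrite H; ring.
    - apply functional_extensionality; intro; ring. }
  split.
  - intros t r Ht Htr HrT Z HZ w.
    assert (Hr : 0 <= r <= T) by lra.
    assert (HZr : Zsp T r (rho r Z)) by (apply Hrho; auto).
    assert (HZr' : Zsp T T (rho r Z)) by (apply (Zsp_mono T r); auto).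
    assert (Hrr : forall v, rho r (rho r Z) v = rho r Z v) by (apply Hid; auto).
    apply Rle_antisym; apply (Hsct t r); auto; apply st_le_eq; intro; rewrite Hrr; auto.
  - intros t Ht Z A HZ HA w.
    assert (HTT : 0 <= T <= T) by lra.
    assert (HAZ : Zsp T T (fun v => indicator A v * Z v)).
    { destruct HZ as [[K HK] Hm]. split.
      - exists (Rabs K). intro a. unfold indicator.
        destruct (excluded_middle_informative (A a)).
        + rewrite Rmult_1_l. specialize (HK a). pose proof (Rle_abs K). lra.
        + rewrite Rmult_0_l, Rabs_R0. apply Rabs_pos.
      - intro c. pose proof (Ft_mono T t A ltac:(lra) HA) as HA'.
        pose proof (generated_sigma (A:=Xi0 X T)
          (fun E => exists s y, 0 <= s <= T /\ forall w, E w <-> proj1_sig w s = y)) as HS.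
        apply (M_ext _ (fun a => (A a /\ c < Z a) \/ (~ A a /\ c < 0))).
        + apply sig_union; auto; apply sig_inter; auto.
          * apply sig_compl; auto.
          * apply sig_const; auto.
        + intro a. unfold indicator. destruct (excluded_middle_informative (A a)).
          * rewrite Rmult_1_l. tauto.
          * rewrite Rmult_0_l. tauto. }
    assert (Hsat : forall eta : Xi X t T (proj1_sig w t),
               A (Defs.concat w t (proj1_sig eta)) <-> A w).
    { intro eta. symmetry. apply (Ft_sat T t A HA).
      apply concat_agree. apply (proj2 (proj2_sig eta)). }
    unfold indicator at 2. destruct (excluded_middle_informative (A w)) as [Hw|Hw].
    + rewrite Rmult_1_l.
      apply Rle_antisym; apply (Hsct t T); auto; try lra; apply st_le_eq; intro eta;
        rewrite !(Hid T HTT); auto; unfold indicator;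
        destruct (excluded_middle_informative _) as [h|h]; try ring;
        exfalso; apply h; apply (Hsat eta); auto.
    + rewrite Rmult_0_l. rewrite <- (Hnorm t ltac:(lra) w).
      apply Rle_antisym; apply (Hsct t T); auto; try lra; try apply Zsp0;
        apply st_le_eq; intro eta;
        rewrite !(Hid T HTT); auto; try apply Zsp0; unfold indicator;
        destruct (excluded_middle_informative _) as [h|h]; try ring;
        exfalso; apply Hw; apply (Hsat eta); auto.
Qed.
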